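(* Let $k$ be a field, $Q,q\in k^\times$, $n,d\geq1$, and consider the right action of $\mathcal H^B_{Q,q}(d)$ on $V_n^{\otimes d}$. For each $1\le i\le d$, every eigenvalue of $K_i=T_{i-1}\cdots T_1T_0T_1\cdots T_{i-1}$ acting on $V_n^{\otimes d}$ is of the form $-Qq^{2j}$ or $Q^{-1}q^{2j}$ for some integer $j$ with $|j|<i$.
   Context: $\mathcal H^B_{Q,q}(d)$ is the $k$-algebra generated by $T_0,\dots,T_{d-1}$ with relations $(T_0+Q)(T_0-Q^{-1})=0$; $(T_i+q)(T_i-q^{-1})=0$ ($i>0$); $T_iT_{i+1}T_i=T_{i+1}T_iT_{i+1}$ ($i>0$); $T_0T_1T_0T_1=T_1T_0T_1T_0$; $T_iT_j=T_jT_i$ ($|i-j|>1$). For $n=2r$ let $\mathbb I_n=\{-\tfrac{2r-1}{2},\dots,-\tfrac12,\tfrac12,\dots,\tfrac{2r-1}{2}\}$ and for $n=2r+1$ let $\mathbb I_n=\{-r,\dots,0,\dots,r\}$. $V_n$ is the $k$-vector space with basis $\{v_i: i\in\mathbb I_n\}$. Define $R_q:V_n\otimes V_n\to V_n\otimes V_n$ by $v_i\otimes v_j\mapsto q^{-1}v_i\otimes v_j$ if $i=j$, $v_j\otimes v_i$ if $i<j$, $v_j\otimes v_i+(q^{-1}-q)v_i\otimes v_j$ if $i>j$; and $K_Q:V_n\to V_n$ by $v_i\mapsto Q^{-1}v_i$ if $i=0$, $v_{-i}$ if $i>0$, $v_{-i}+(Q^{-1}-Q)v_i$ if $i<0$.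 The right action of $\mathcal H^B_{Q,q}(d)$ on $V_n^{\otimes d}$ is given by letting $T_i$ ($i>0$) act as $R_q$ on tensor factors $i,i+1$ (identity elsewhere) and $T_0$ act as $K_Q$ on the first tensor factor (identity elsewhere). *)

(* Defs.v *)
From HB Require Import structures.
From mathcomp Require Import all_boot all_order all_algebra.
Set Implicit Arguments. Unset Strict Implicit. Unset Printing Implicit Defensive.
Import Order.TTheory GRing.Theory Num.Theory.
Local Open Scope ring_scope.

(* Encoding of the index set I_n: the ordinal a : 'I_n stands for the
   (half-)integer a - (n-1)/2.  Thus the order on I_n is the order on 'I_n,
   the sign of a - (n-1)/2 is the sign of 2a - (n-1), and negation i |-> -i
   is a |-> n-1-a. *)
(* Basis of V_n^{\otimes d}: words x : 'I_d -> 'I_n, x = v_{x 0} (x) ... (x) v_{x (d-1)}. *)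
Definition word (n d : nat) := {ffun 'I_d -> 'I_n}.

Section Ops.
Variables (k : fieldType) (Q q : k) (n d : nat).

(* the letter at 0-based position p (as a natural number; 0 if p >= d,
   which never happens for the positions used below) *)
Definition letter (x : word n d) (p : nat) : nat :=
  oapp (fun t : 'I_d => nat_of_ord (x t)) 0%N (insub p).

Definition swapw (p p' : nat) (x : word n d) : word n d :=
  [ffun t : 'I_d => if nat_of_ord t == p then insubd (x t) (letter x p')
                    else if nat_of_ord t == p' then insubd (x t) (letter x p)
                    else x t].

Definition setw (p : nat) (b : nat) (x : word n d) : word n d :=
  [ffun t : 'I_d => if nat_of_ord t == p then insubd (x t) b else x t].

Definition R_coef (p p' : nat) (x w : word n d) : k :=
  let a := letter x p in let b := letter x p' in
  if a == b then (if w == x then q^-1 else 0)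
  else if (a < b)%N then (if w == swapw p p' x then 1 else 0)
  else (if w == swapw p p' x then 1 else 0)
       + (if w == x then q^-1 - q else 0).

(* coefficient of basis word w in K_Q applied to the factor at position p0 of x;
   letter value a encodes the index a - (n-1)/2: it is 0 iff 2a = n-1, positive
   iff 2a > n-1, and its negative is encoded by n-1-a. *)
Definition K_coef (p0 : nat) (x w : word n d) : k :=
  let a := letter x p0 in
  if (a.*2 == n.-1)%N then (if w == x then Q^-1 else 0)
  else if (n.-1 < a.*2)%N then (if w == setw p0 (n.-1 - a) x then 1 else 0)
  else (if w == setw p0 (n.-1 - a) x then 1 else 0)
       + (if w == x then Q^-1 - Q else 0).

Definition N := #|{: word n d}|.

Definition mx_of (f : word n d -> word n d -> k) : 'M[k]_N :=
  \matrix_(r, c) f (enum_val r) (enum_val c).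

(* Matrix of the action of T_j on V_n^{\otimes d}, acting on ROW vectors
   (right action): entry (x, w) is the coefficient of basis w in v_x .
   T_0 acts as K_Q on the first factor; T_j (j > 0) acts as R_q on the
   factors j, j+1 (1-based), i.e. 0-based positions j-1, j. *)
Definition T_mx (j : nat) : 'M[k]_N :=
  mx_of (fun x w =>
    if j is j'.+1 then R_coef j' j x w
    else K_coef 0 x w).

Definition K_mx (i : nat) : 'M[k]_N :=
  foldl (fun M j => T_mx j *m M *m T_mx j) (T_mx 0) (iota 1 i.-1).

End Ops.

(* Main.v *)
Require Import Defs.
From HB Require Import structures.
From mathcomp Require Import all_boot all_order all_algebra.
From mathcomp Require Import ring zify.
Import Order.TTheory GRing.Theory Num.Theory.
Local Open Scope ring_scope.
Set Implicit Arguments. Unset Strict Implicit. Unset Printing Implicit Defensive.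

Section Abs.
Variables (k : fieldType) (N : nat).
Local Notation M := 'M[k]_N.

Ltac ncn := rewrite ?mulmxDl ?mulmxDr ?mulmxBl ?mulmxBr ?mulNmx ?mulmxN -?scalemxAl -?scalemxAr ?mulmxA ?mulmx1 ?mul1mx.
Ltac genp := repeat match goal with |- context [?A *m ?B] => let Z := fresh "Z" in move: (A *m B) => Z end.
Ltac mxring := genp; apply/matrixP => i j; rewrite !mxE; ring.

Section Step.
Variables (X Y T : M) (c : k).
Hypotheses (hT : T *m T = c *: T + 1%:M) (hY : Y = T *m X *m T) (hXY : X *m Y = Y *m X).

Lemma TT1 : T *m (T - c%:M) = 1%:M.
Proof. rewrite mulmxBr hT mul_mx_scalar. by rewrite addrAC subrr add0r. Qed.
Lemma TT2 : (T - c%:M) *m T = 1%:M.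
Proof. rewrite mulmxBl hT mul_scalar_mx. by rewrite addrAC subrr add0r. Qed.

Lemma hTX : T *m X = Y *m T - c *: Y.
Proof. by rewrite -[T *m X]mulmx1 -TT1 mulmxA -hY mulmxBr mul_mx_scalar. Qed.
Lemma hXT : X *m T = T *m Y - c *: Y.
Proof.
rewrite -[X *m T]mul1mx -TT2 -mulmxA [T *m (X *m T)]mulmxA -hY.
by rewrite mulmxBl mul_scalar_mx.
Qed.

Lemma hTY : T *m Y = X *m T + c *: Y.
Proof. by rewrite hXT addrNK. Qed.
Lemma hYX : Y *m X = X *m Y. Proof. by rewrite hXY. Qed.
Lemma hT' (A : M) : A *m T *m T = c *: (A *m T) + A.
Proof. by rewrite -mulmxA hT mulmxDr mulmx1 scalemxAr. Qed.
Lemma hTX' (A : M) : A *m T *m X = A *m Y *m T - c *: (A *m Y).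
Proof. by rewrite -mulmxA hTX mulmxBr mulmxA scalemxAr. Qed.
Lemma hTY' (A : M) : A *m T *m Y = A *m X *m T + c *: (A *m Y).
Proof. by rewrite -mulmxA hTY mulmxDr mulmxA scalemxAr. Qed.
Lemma hYX' (A : M) : A *m Y *m X = A *m X *m Y.
Proof. by rewrite -mulmxA hYX mulmxA. Qed.

Ltac nf := do 8 (ncn; rewrite ?hTX' ?hTY' ?hT' ?hYX' ?hTX ?hTY ?hT ?hYX).

Definition phi := T *m X - X *m T.

Lemma phiX : phi *m X = Y *m phi.
Proof. rewrite /phi. nf. mxring. Qed.

Lemma phi2 : phi *m phi = (2%:R + c ^+ 2) *: (X *m Y) - X *m X - Y *m Y.
Proof. rewrite /phi. nf. mxring. Qed.

End Step.
Fixpoint pr (A : M) (s : seq k) : M := if s is a :: s' then (A - a%:M) *m pr A s' else 1%:M.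

Lemma pr_cat A s1 s2 : pr A (s1 ++ s2) = pr A s1 *m pr A s2.
Proof. elim: s1 => [|a s1 IH] /=; first by rewrite mul1mx. by rewrite IH mulmxA. Qed.

Definition cm (A B : M) := A *m B = B *m A.

Lemma cm_sym A B : cm A B -> cm B A. Proof. by []. Qed.
Lemma cm_refl A : cm A A. Proof. by []. Qed.
Lemma cm_scal A a : cm A a%:M. Proof. by rewrite /cm scalar_mxC. Qed.
Lemma cm1 A : cm A 1%:M. Proof. exact: cm_scal. Qed.
Lemma cmB A B C : cm A B -> cm A C -> cm A (B - C).
Proof. by rewrite /cm mulmxBl mulmxBr => -> ->. Qed.
Lemma cmD A B C : cm A B -> cm A C -> cm A (B + C).
Proof. by rewrite /cm mulmxDl mulmxDr => -> ->. Qed.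
Lemma cmZ A B a : cm A B -> cm A (a *: B).
Proof. by rewrite /cm -scalemxAl -scalemxAr => ->. Qed.
Lemma cmM A B C : cm A B -> cm A C -> cm A (B *m C).
Proof. by rewrite /cm => hB hC; rewrite mulmxA hB -!mulmxA hC. Qed.
Lemma cm_pr A B s : cm A B -> cm A (pr B s).
Proof. move=> h; elim: s => [|a s IH] /=; first exact: cm1. by apply: cmM => //; apply: cmB => //; apply: cm_scal. Qed.

Lemma pr_eig (g : M) (a : k) (v : 'rV_N) s : v *m g = a *: v ->
  v *m pr g s = (\prod_(c <- s) (a - c)) *: v.
Proof.
move=> hv; elim: s => [|c s IH] /=; first by rewrite big_nil mulmx1 scale1r.
rewrite big_cons mulmxA mulmxBr hv mul_mx_scalar -scalerBl -scalemxAl IH scalerA.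
by [].
Qed.

Lemma transfer (X Z : M) s : cm X Z -> forall W, cm W X -> W *m Z = W *m X ->
  W *m pr Z s = W *m pr X s.
Proof.
move=> hXZ; elim: s => [|a s IH] W hWX hWZ //=.
rewrite !mulmxA mulmxBr hWZ -mulmxBr.
apply: IH.
  apply: cm_sym; apply: cmM; first exact: cm_sym.
  by apply: cmB; [exact: cm_refl|exact: cm_scal].
rewrite -!mulmxA.
have e1 : (X - a%:M) *m Z = Z *m (X - a%:M).
  by apply: cm_sym; apply: cmB; [exact: cm_sym|exact: cm_scal].
have e2 : (X - a%:M) *m X = X *m (X - a%:M).
  by apply: cm_sym; apply: cmB; [exact: cm_refl|exact: cm_scal].
by rewrite e1 e2 !mulmxA hWZ.
Qed.

Lemma pr_scale (b : k) Y s : b != 0 ->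
  pr (b *: Y) s = b ^+ size s *: pr Y (map (fun a => b^-1 * a) s).
Proof.
move=> hb; elim: s => [|a s IH] /=; first by rewrite expr0 scale1r.
rewrite IH exprS.
have -> : b *: Y - a%:M = b *: (Y - (b^-1 * a)%:M).
  by rewrite scalerBr scale_scalar_mx mulrA divff // mul1r.
by rewrite -scalemxAl -scalemxAr scalerA.
Qed.

Section Step2.
Variables (X T : M) (q : k).
Hypotheses (hq : q != 0) (hT : T *m T = (q^-1 - q) *: T + 1%:M)
  (hXY : cm X (T *m X *m T)).

Lemma step s : pr X s = 0 ->
  pr (T *m X *m T) (s ++ map (fun a => (q ^+ 2)^-1^-1 * a) s ++ map (fun a => (q ^+ 2)^-1 * a) s) = 0.
Proof.
set Y := T *m X *m T => hP.
have hY : Y = T *m X *m T by [].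
have hPhi : pr Y s *m phi X T *m phi X T = 0.
  have h1 : forall s', phi X T *m pr X s' = pr Y s' *m phi X T.
    elim=> [|a s' IH] /=; first by rewrite mulmx1 mul1mx.
    rewrite mulmxA mulmxBr (phiX hT hY hXY) mul_mx_scalar -mul_scalar_mx -mulmxBl -!mulmxA IH.
    by [].
  by rewrite -h1 hP mulmx0 mul0mx.
rewrite -mulmxA (phi2 hT hY hXY) in hPhi.
have q2 : q ^+ 2 != 0 by rewrite expf_neq0.
have eF : (2%:R + (q^-1 - q) ^+ 2) *: (X *m Y) - X *m X - Y *m Y =
          - ((X - (q ^+ 2) *: Y) *m (X - (q ^+ 2)^-1 *: Y)).
  have e : 2%:R + (q^-1 - q) ^+ 2 = q ^+ 2 + (q ^+ 2)^-1.
    by field.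
  rewrite e mulmxBl !mulmxBr -!scalemxAl -!scalemxAr hXY scalerA divff //.
  rewrite scale1r scalerDl. apply/matrixP => i j; rewrite !mxE. ring.
rewrite eF mulmxN in hPhi; move/eqP: hPhi; rewrite oppr_eq0 => /eqP hPhi.
have cXY : cm X Y by [].
have cYX : cm Y X by [].
set W1 := pr Y s *m (X - q ^+ 2 *: Y).
have cW1 : cm W1 X.
  apply: cm_sym; apply: cmM; first exact: cm_pr.
  apply: cmB; [exact: cm_refl| exact: cmZ].
have hW1 : W1 *m ((q ^+ 2)^-1 *: Y) = W1 *m X.
  apply/eqP; rewrite eq_sym -subr_eq0 -mulmxBr; apply/eqP; by rewrite /W1 -mulmxA.
have h1 : W1 *m pr ((q ^+ 2)^-1 *: Y) s = W1 *m pr X s by apply: transfer => //; exact: cmZ.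
rewrite hP mulmx0 pr_scale ?invr_eq0 // -scalemxAr in h1.
move/eqP: h1; rewrite scaler_eq0 expf_eq0 invr_eq0 (negbTE q2) andbF /= => /eqP h1.
set s2 := map _ s in h1.
set W2 := pr Y s *m pr Y s2.
have cW2 : cm W2 X.
  apply: cm_sym; apply: cmM; exact: cm_pr.
have hW2 : W2 *m (q ^+ 2 *: Y) = W2 *m X.
  apply/eqP; rewrite eq_sym -subr_eq0 -mulmxBr; apply/eqP.
  rewrite /W2 -mulmxA.
  have -> : pr Y s2 *m (X - q ^+ 2 *: Y) = (X - q ^+ 2 *: Y) *m pr Y s2.
    apply: cm_sym; apply: cm_pr; apply: cm_sym; apply: cmB; [exact: cYX|exact: cmZ; exact: cm_refl].
  by rewrite mulmxA h1.
have h2 : W2 *m pr (q ^+ 2 *: Y) s = W2 *m pr X s by apply: transfer => //; exact: cmZ.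
rewrite hP mulmx0 pr_scale // -scalemxAr in h2.
move/eqP: h2; rewrite scaler_eq0 expf_eq0 (negbTE q2) andbF /= => /eqP h2.
by rewrite !pr_cat mulmxA.
Qed.
End Step2.

Section KK.
Variables (t : nat -> M) (d : nat) (Q q : k).
Hypotheses (hQ : Q != 0) (hq : q != 0).
Hypothesis quad0 : pr (t 0) [:: - Q; Q^-1] = 0.
Hypothesis quadj : forall j, (0 < j < d)%N -> t j *m t j = (q^-1 - q) *: t j + 1%:M.
Hypothesis braid0 : (1 < d)%N -> t 0 *m t 1 *m t 0 *m t 1 = t 1 *m t 0 *m t 1 *m t 0.
Hypothesis braidj : forall j, (0 < j)%N -> (j.+1 < d)%N ->
  t j *m t j.+1 *m t j = t j.+1 *m t j *m t j.+1.
Hypothesis commj : forall j l, (j.+1 < l)%N -> (l < d)%N -> t j *m t l = t l *m t j.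

Definition Kf i := foldl (fun A j => t j *m A *m t j) (t 0) (iota 1 i.-1).

Lemma KfS i : (0 < i)%N -> Kf i.+1 = t i *m Kf i *m t i.
Proof.
case: i => // i _.
have e : iota 1 i.+1 = iota 1 i ++ [:: i.+1] by rewrite -(addn1 i) iotaD addnC.
by rewrite /Kf (_ : i.+2.-1 = i.+1) // e foldl_cat.
Qed.
Lemma Kf1 : Kf 1 = t 0. Proof. by []. Qed.

Lemma Kfar m l : (0 < m)%N -> (m < l)%N -> (l < d)%N -> Kf m *m t l = t l *m Kf m.
Proof.
elim: m => // m IH _ hml hld.
case: m IH hml => [|m] IH hml; first by rewrite Kf1 commj.
rewrite KfS //.
have h1 : t m.+1 *m t l = t l *m t m.+1 by apply: commj.
have IH2 := IH isT (ltnW hml) hld.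
by rewrite -!mulmxA h1 [Kf m.+1 *m (t l *m _)]mulmxA IH2 !mulmxA h1.
Qed.

Lemma Knext m : (0 < m)%N -> (m < d)%N -> Kf m *m Kf m.+1 = Kf m.+1 *m Kf m.
Proof.
elim: m => // m IH _ hmd.
case: m IH hmd => [|m] IH hmd.
  rewrite (KfS (i:=1)) // Kf1 !mulmxA. exact: braid0.
have IH' := IH isT (ltnW hmd).
rewrite (KfS (i:=m.+1)) // in IH'; rewrite (KfS (i:=m.+2)) // (KfS (i:=m.+1)) //.
set a := t m.+1 in IH' *; set b := t m.+2; set L := Kf m.+1 in IH' *.
have br0 : a *m b *m a = b *m a *m b by rewrite /a /b; apply: braidj.
have br : forall A : M, A *m a *m b *m a = A *m b *m a *m b.
  by move=> A; rewrite -!mulmxA [a *m (b *m a)]mulmxA br0 !mulmxA.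
have Lb : forall A : M, A *m L *m b = A *m b *m L.
  by move=> A; rewrite -!mulmxA /L /b Kfar.
have ih : forall A : M, A *m L *m a *m L *m a = A *m a *m L *m a *m L.
  move=> A; rewrite -!mulmxA; congr (_ *m _); move: IH'; rewrite !mulmxA => -> //.
rewrite ?mulmxA.
rewrite (br (a *m L)) (Lb a) -(Lb (a *m b *m L *m a)) -(br (a *m b *m L *m a *m L)).
rewrite (ih (a *m b)) br0 -(Lb (b *m a)) (Lb (b *m a *m L *m b *m a)).
by rewrite -(br (b *m a *m L)).
Qed.

Definition Cond i (c : k) := exists j : int, (`|j| < i)%N /\
    (c = - Q * q ^ (2 * j) \/ c = Q^-1 * q ^ (2 * j)).

Lemma CondS i c : Cond i c -> Cond i.+1 c.
Proof. case=> j [hj h]; exists j; split => //; exact: ltnW. Qed.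

Lemma CondU i c : Cond i c -> Cond i.+1 ((q ^+ 2)^-1^-1 * c).
Proof.
case=> j [hj h]; exists (j + 1); split; first lia.
have e : q ^ (2 * (j + 1)) = q ^+ 2 * q ^ (2 * j).
  by rewrite mulrDr mulr1 expfzDr // mulrC.
rewrite invrK e; case: h => ->; [left|right]; ring.
Qed.

Lemma CondD i c : Cond i c -> Cond i.+1 ((q ^+ 2)^-1 * c).
Proof.
case=> j [hj h]; exists (j - 1); split; first lia.
have e : q ^ (2 * (j - 1)) = (q ^+ 2)^-1 * q ^ (2 * j).
  by rewrite mulrBr mulr1 expfzDr // mulrC.
rewrite e; case: h => ->; [left|right]; ring.
Qed.

Lemma good i : (0 < i <= d)%N -> exists s, (forall c, c \in s -> Cond i c) /\ pr (Kf i) s = 0.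
Proof.
elim: i => // i IH /andP [_ hid].
case: i IH hid => [|i] IH hid.
  exists [:: - Q; Q^-1]; split => // c; rewrite !inE => /orP [] /eqP ->; exists 0; split => //.
    by left; rewrite mulr0 expr0z mulr1.
  by right; rewrite mulr0 expr0z mulr1.
have [s [hs hP]] := IH (ltnW hid).
exists (s ++ map (fun a => (q ^+ 2)^-1^-1 * a) s ++ map (fun a => (q ^+ 2)^-1 * a) s).
split.
  move=> c; rewrite !mem_cat => /or3P [h|/mapP [a ha ->]|/mapP [a ha ->]].
  - exact/CondS/hs.
  - exact/CondU/hs.
  - exact/CondD/hs.
rewrite KfS //; apply: step => //.
  by apply: quadj; rewrite hid.
by rewrite /cm -KfS // Knext.
Qed.
End KK.
End Abs.

Section Words.
Variables (n d : nat).
Hypothesis hn : (0 < n)%N.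
Local Notation W := (word n d).

Lemma letter_ord (x : W) (t : 'I_d) : letter x t = x t.
Proof. by rewrite /letter valK. Qed.

Lemma letter_out (x : W) p : (d <= p)%N -> letter x p = 0%N.
Proof. by move=> h; rewrite /letter insubF // ltnNge h. Qed.

Lemma letter_lt (x : W) p : (letter x p < n)%N.
Proof.
case: (ltnP p d) => h; last by rewrite letter_out.
by rewrite -[p]/(val (Ordinal h)) letter_ord.
Qed.

Lemma word_eq (x y : W) : (forall p, (p < d)%N -> letter x p = letter y p) -> x = y.
Proof.
move=> h; apply/ffunP => t; apply: val_inj => /=.
by rewrite -!letter_ord h.
Qed.

Lemma val_insubd' (u : 'I_n) v : (v < n)%N -> val (insubd u v) = v.
Proof. by move=> h; rewrite val_insubd h. Qed.

Lemma letter_setw p v (x : W) r : (r < d)%N -> (v < n)%N ->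
  letter (setw p v x) r = if r == p then v else letter x r.
Proof.
move=> hr hv; rewrite -[r]/(val (Ordinal hr)) !letter_ord /setw ffunE /=.
by case: ifP => // _; rewrite val_insubd'.
Qed.

Lemma letter_swapw p p' (x : W) r : (r < d)%N ->
  letter (swapw p p' x) r = if r == p then letter x p' else if r == p' then letter x p else letter x r.
Proof.
move=> hr; rewrite -[r]/(val (Ordinal hr)) !letter_ord /swapw ffunE /=.
by case: ifP => _; [|case: ifP => _ //]; rewrite val_insubd' ?letter_lt.
Qed.
End Words.

Section Mats.
Variables (k : fieldType) (Q q : k) (n d : nat).
Hypothesis hn : (0 < n)%N.
Local Notation W := (word n d).
Local Notation NN := (N n d).
Local Notation T := (T_mx Q q n d).

Definition bvec (x : W) : 'rV[k]_NN := delta_mx 0 (enum_rank x).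

Lemma eqv (c : 'I_NN) (y : W) : (enum_val c == y) = (c == enum_rank y).
Proof. by apply/eqP/eqP => [<-|->]; [rewrite enum_valK | rewrite enum_rankK]. Qed.

Lemma e_mx (x : W) f c : (bvec x *m mx_of f) 0 c = f x (enum_val c).
Proof. by rewrite /bvec -rowE !mxE enum_rankK. Qed.

Lemma e_ent (x : W) c : bvec x 0 c = (c == enum_rank x)%:R.
Proof. by rewrite /bvec mxE eqxx. Qed.

Definition rc1 (a b : nat) : k := if a == b then 0 else 1.
Definition rc2 (a b : nat) : k := if a == b then q^-1 else if (a < b)%N then 0 else q^-1 - q.
Definition kc1 (a : nat) : k := if (a.*2 == n.-1)%N then 0 else 1.
Definition kc2 (a : nat) : k :=
  if (a.*2 == n.-1)%N then Q^-1 else if (n.-1 < a.*2)%N then 0 else Q^-1 - Q.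

Lemma eR j (x : W) : bvec x *m T j.+1 =
  rc1 (letter x j) (letter x j.+1) *: bvec (swapw j j.+1 x) + rc2 (letter x j) (letter x j.+1) *: bvec x.
Proof.
apply/rowP => c; rewrite e_mx !mxE eqxx /R_coef /rc1 /rc2 !eqv /=.
case: (letter x j == letter x j.+1); case: (letter x j < letter x j.+1)%N;
  case: (c == enum_rank (swapw j j.+1 x)); case: (c == enum_rank x); rewrite /=; ring.
Qed.

Lemma eK (x : W) : bvec x *m T 0 =
  kc1 (letter x 0) *: bvec (setw 0 (n.-1 - letter x 0) x) + kc2 (letter x 0) *: bvec x.
Proof.
apply/rowP => c; rewrite e_mx !mxE eqxx /K_coef /kc1 /kc2 !eqv /=.
case: ((letter x 0).*2 == n.-1)%N; case: (n.-1 < (letter x 0).*2)%N;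
  case: (c == enum_rank (setw 0 (n.-1 - letter x 0) x)); case: (c == enum_rank x); rewrite /=; ring.
Qed.

Lemma mx_eq_e (A B : 'M[k]_NN) : (forall x, bvec x *m A = bvec x *m B) -> A = B.
Proof.
move=> h; apply/row_matrixP => i; rewrite !rowE.
by have := h (enum_val i); rewrite /bvec enum_valK.
Qed.
End Mats.

Section Canon.
Variables (n d : nat).
Hypothesis hn : (0 < n)%N.
Local Notation W := (word n d).

Lemma nS1 p : (p.+1 == p) = false. Proof. by elim: p. Qed.
Lemma nS2 p : (p.+2 == p) = false. Proof. by elim: p. Qed.
Lemma nS1' p : (p == p.+1) = false. Proof. by elim: p. Qed.
Lemma nS2' p : (p == p.+2) = false. Proof. by elim: p. Qed.

Definition w2 (x : W) p u v := setw p u (setw p.+1 v x).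
Definition w3 (x : W) p u v w := setw p u (setw p.+1 v (setw p.+2 w x)).

Ltac wsimp := rewrite ?(letter_swapw, letter_setw, letter_lt) ?nS1 ?nS2 ?nS1' ?nS2' ?eqSS ?nS1 ?nS2 ?nS1' ?nS2' ?eqxx //=.

Ltac wtac := apply: word_eq => ? ?; rewrite /w2 /w3; wsimp;
  repeat (wsimp; match goal with |- context [?a == ?b] => case: (@eqP _ a b) => [?|?]; try subst end); try done.

Ltac pre := move=> hp hu hv hw; have hp1 := ltnW hp; have hp0 := ltnW hp1.

Lemma w3_swap1 (x : W) p u v w : (p.+2 < d)%N -> (u < n)%N -> (v < n)%N -> (w < n)%N ->
  swapw p p.+1 (w3 x p u v w) = w3 x p v u w.
Proof. pre; wtac. Qed.

Lemma w3_swap2 (x : W) p u v w : (p.+2 < d)%N -> (u < n)%N -> (v < n)%N -> (w < n)%N ->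
  swapw p.+1 p.+2 (w3 x p u v w) = w3 x p u w v.
Proof. pre; wtac. Qed.
Lemma w3_l0 (x : W) p u v w : (p.+2 < d)%N -> (u < n)%N -> (v < n)%N -> (w < n)%N ->
  letter (w3 x p u v w) p = u.
Proof. pre; rewrite /w3; wsimp. Qed.
Lemma w3_l1 (x : W) p u v w : (p.+2 < d)%N -> (u < n)%N -> (v < n)%N -> (w < n)%N ->
  letter (w3 x p u v w) p.+1 = v.
Proof. pre; rewrite /w3; wsimp. Qed.
Lemma w3_l2 (x : W) p u v w : (p.+2 < d)%N -> (u < n)%N -> (v < n)%N -> (w < n)%N ->
  letter (w3 x p u v w) p.+2 = w.
Proof. pre; rewrite /w3; wsimp. Qed.
Lemma w3_id (x : W) p : (p.+2 < d)%N ->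
  w3 x p (letter x p) (letter x p.+1) (letter x p.+2) = x.
Proof.
move=> hp; have hu := letter_lt hn x p; have hv := letter_lt hn x p.+1;
have hw := letter_lt hn x p.+2; move: hp hu hv hw; pre; wtac.
Qed.

Definition w12 (x : W) r a b c := setw 0 a (setw r b (setw r.+1 c x)).
Definition w22 (x : W) p a b r c bvec := setw p a (setw p.+1 b (setw r c (setw r.+1 bvec x))).

Ltac wtac2 := apply: word_eq => ? ?; rewrite /w2 /w3 /w12 /w22; wsimp;
  repeat (wsimp; match goal with |- context [?a == ?b] => case: (@eqP _ a b) => [?|?]; try subst end); try done; try lia.

Lemma w1_l (x : W) u : (0 < d)%N -> (u < n)%N -> letter (setw 0 u x) 0 = u.
Proof. move=> hd hu; wsimp. Qed.
Lemma w1_set (x : W) u v : (0 < d)%N -> (u < n)%N -> (v < n)%N ->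
  setw 0 v (setw 0 u x) = setw 0 v x.
Proof. move=> hd hu hv; wtac2. Qed.
Lemma w1_id (x : W) : (0 < d)%N -> setw 0 (letter x 0) x = x.
Proof. move=> hd; have hu := letter_lt hn x 0; wtac2. Qed.

Lemma w2_l0 (x : W) p u v : (p.+1 < d)%N -> (u < n)%N -> (v < n)%N -> letter (w2 x p u v) p = u.
Proof. move=> hp hu hv; have hp0 := ltnW hp; rewrite /w2; wsimp. Qed.
Lemma w2_l1 (x : W) p u v : (p.+1 < d)%N -> (u < n)%N -> (v < n)%N -> letter (w2 x p u v) p.+1 = v.
Proof. move=> hp hu hv; have hp0 := ltnW hp; rewrite /w2; wsimp. Qed.
Lemma w2_swap (x : W) p u v : (p.+1 < d)%N -> (u < n)%N -> (v < n)%N ->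
  swapw p p.+1 (w2 x p u v) = w2 x p v u.
Proof. move=> hp hu hv; have hp0 := ltnW hp; wtac2. Qed.
Lemma w2_set0 (x : W) u v a : (1 < d)%N -> (u < n)%N -> (v < n)%N -> (a < n)%N ->
  setw 0 a (w2 x 0 u v) = w2 x 0 a v.
Proof. move=> hp hu hv ha; have hp0 := ltnW hp; wtac2. Qed.
Lemma w2_id (x : W) p : (p.+1 < d)%N -> w2 x p (letter x p) (letter x p.+1) = x.
Proof.
move=> hp; have hp0 := ltnW hp; have hu := letter_lt hn x p; have hv := letter_lt hn x p.+1; wtac2.
Qed.

Lemma w12_l0 (x : W) r a b c : (0 < r)%N -> (r.+1 < d)%N -> (a < n)%N -> (b < n)%N -> (c < n)%N ->
  letter (w12 x r a b c) 0 = a.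
Proof. move=> h0 hr ha hb hc; have hr0 := ltnW hr; rewrite /w12; wsimp; lia. Qed.
Lemma w12_l1 (x : W) r a b c : (0 < r)%N -> (r.+1 < d)%N -> (a < n)%N -> (b < n)%N -> (c < n)%N ->
  letter (w12 x r a b c) r = b.
Proof. move=> h0 hr ha hb hc; have hr0 := ltnW hr; rewrite /w12; wsimp; case: eqP => //; lia. Qed.
Lemma w12_l2 (x : W) r a b c : (0 < r)%N -> (r.+1 < d)%N -> (a < n)%N -> (b < n)%N -> (c < n)%N ->
  letter (w12 x r a b c) r.+1 = c.
Proof. move=> h0 hr ha hb hc; have hr0 := ltnW hr; rewrite /w12; wsimp. Qed.
Lemma w12_set (x : W) r a b c a' : (0 < r)%N -> (r.+1 < d)%N -> (a < n)%N -> (b < n)%N -> (c < n)%N ->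
  (a' < n)%N -> setw 0 a' (w12 x r a b c) = w12 x r a' b c.
Proof. move=> h0 hr ha hb hc ha'; have hr0 := ltnW hr; wtac2. Qed.
Lemma w12_swap (x : W) r a b c : (0 < r)%N -> (r.+1 < d)%N -> (a < n)%N -> (b < n)%N -> (c < n)%N ->
  swapw r r.+1 (w12 x r a b c) = w12 x r a c b.
Proof. move=> h0 hr ha hb hc; have hr0 := ltnW hr; wtac2. Qed.
Lemma w12_id (x : W) r : (0 < r)%N -> (r.+1 < d)%N -> w12 x r (letter x 0) (letter x r) (letter x r.+1) = x.
Proof.
move=> h0 hr; have hr0 := ltnW hr; have ha := letter_lt hn x 0;
have hb := letter_lt hn x r; have hc := letter_lt hn x r.+1; wtac2.
Qed.

Lemma w22_l0 (x : W) p a b r c bvec : (p.+1 < r)%N -> (r.+1 < d)%N -> (a < n)%N -> (b < n)%N -> (c < n)%N -> (bvec < n)%N ->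
  letter (w22 x p a b r c bvec) p = a.
Proof. move=> h0 hr ha hb hc he; have hr0 := ltnW hr; rewrite /w22; wsimp; lia. Qed.
Lemma w22_l1 (x : W) p a b r c bvec : (p.+1 < r)%N -> (r.+1 < d)%N -> (a < n)%N -> (b < n)%N -> (c < n)%N -> (bvec < n)%N ->
  letter (w22 x p a b r c bvec) p.+1 = b.
Proof. move=> h0 hr ha hb hc he; have hr0 := ltnW hr; rewrite /w22; wsimp; repeat case: eqP => //; lia. Qed.
Lemma w22_l2 (x : W) p a b r c bvec : (p.+1 < r)%N -> (r.+1 < d)%N -> (a < n)%N -> (b < n)%N -> (c < n)%N -> (bvec < n)%N ->
  letter (w22 x p a b r c bvec) r = c.
Proof. move=> h0 hr ha hb hc he; have hr0 := ltnW hr; rewrite /w22; wsimp; repeat case: eqP => //; lia. Qed.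
Lemma w22_l3 (x : W) p a b r c bvec : (p.+1 < r)%N -> (r.+1 < d)%N -> (a < n)%N -> (b < n)%N -> (c < n)%N -> (bvec < n)%N ->
  letter (w22 x p a b r c bvec) r.+1 = bvec.
Proof. move=> h0 hr ha hb hc he; have hr0 := ltnW hr; rewrite /w22; wsimp; repeat case: eqP => //; lia. Qed.
Lemma w22_swap1 (x : W) p a b r c bvec : (p.+1 < r)%N -> (r.+1 < d)%N -> (a < n)%N -> (b < n)%N -> (c < n)%N -> (bvec < n)%N ->
  swapw p p.+1 (w22 x p a b r c bvec) = w22 x p b a r c bvec.
Proof. move=> h0 hr ha hb hc he; have hr0 := ltnW hr; wtac2. Qed.
Lemma w22_swap2 (x : W) p a b r c bvec : (p.+1 < r)%N -> (r.+1 < d)%N -> (a < n)%N -> (b < n)%N -> (c < n)%N -> (bvec < n)%N ->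
  swapw r r.+1 (w22 x p a b r c bvec) = w22 x p a b r bvec c.
Proof. move=> h0 hr ha hb hc he; have hr0 := ltnW hr; wtac2. Qed.
Lemma w22_id (x : W) p r : (p.+1 < r)%N -> (r.+1 < d)%N ->
  w22 x p (letter x p) (letter x p.+1) r (letter x r) (letter x r.+1) = x.
Proof.
move=> h0 hr; have hr0 := ltnW hr; have ha := letter_lt hn x p; have hb := letter_lt hn x p.+1;
have hc := letter_lt hn x r; have he := letter_lt hn x r.+1; wtac2.
Qed.
End Canon.


Section Rel.
Variables (k : fieldType) (Q q : k) (n d : nat).
Hypotheses (hn : (0 < n)%N) (hQ : Q != 0) (hq : q != 0).
Local Notation W := (word n d).
Local Notation NN := (N n d).
Local Notation T := (T_mx Q q n d).
Local Notation e := (@bvec k n d).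

Lemma eR3a (x : W) p u v w : (p.+2 < d)%N -> (u < n)%N -> (v < n)%N -> (w < n)%N ->
  e (w3 x p u v w) *m T p.+1 = rc1 k u v *: e (w3 x p v u w) + rc2 q u v *: e (w3 x p u v w).
Proof. move=> hp hu hv hw; by rewrite eR w3_l0 // w3_l1 // w3_swap1. Qed.
Lemma eR3b (x : W) p u v w : (p.+2 < d)%N -> (u < n)%N -> (v < n)%N -> (w < n)%N ->
  e (w3 x p u v w) *m T p.+2 = rc1 k v w *: e (w3 x p u w v) + rc2 q v w *: e (w3 x p u v w).
Proof. move=> hp hu hv hw; by rewrite eR w3_l1 // w3_l2 // w3_swap2. Qed.

Ltac genE := repeat match goal with |- context [@bvec _ _ _ ?y] => let E := fresh "E" in move: (@bvec _ _ _ y) => E end.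
Ltac cmp u v := let H := fresh in pose proof (ltngtP u v) as H; case: H => [?|?|?]; [| |subst].

Lemma braidR p : (p.+2 < d)%N -> T p.+1 *m T p.+2 *m T p.+1 = T p.+2 *m T p.+1 *m T p.+2.
Proof.
move=> hp; apply: mx_eq_e => x.
rewrite -(w3_id hn x hp).
move: (letter_lt hn x p) (letter_lt hn x p.+1) (letter_lt hn x p.+2).
move: (letter x p) (letter x p.+1) (letter x p.+2) => u v w hu hv hw.
have h1 := @eR3a x p; have h2 := @eR3b x p.
move: (T p.+1) (T p.+2) h1 h2 => A1 A2 h1 h2.
rewrite !mulmxA.
do 3 rewrite ?(h1, h2) // ?mulmxDl -?scalemxAl ?(h1, h2) //.
rewrite ?scalerA /rc1 /rc2.
cmp u v; try cmp v w; try cmp u w; rewrite ?eqxx ?ltnn /=; try (exfalso; clear h1 h2; lia).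
all: genE; apply/rowP => z; rewrite !mxE; by field.
Qed.

Lemma mlt u : (n.-1 - u < n)%N. Proof. lia. Qed.

Lemma eR2 (x : W) p u v : (p.+1 < d)%N -> (u < n)%N -> (v < n)%N ->
  e (w2 x p u v) *m T p.+1 = rc1 k u v *: e (w2 x p v u) + rc2 q u v *: e (w2 x p u v).
Proof. move=> hp hu hv; by rewrite eR w2_l0 // w2_l1 // w2_swap. Qed.
Lemma eK2 (x : W) u v : (1 < d)%N -> (u < n)%N -> (v < n)%N ->
  e (w2 x 0 u v) *m T 0 = kc1 k n u *: e (w2 x 0 (n.-1 - u) v) + kc2 Q n u *: e (w2 x 0 u v).
Proof. move=> hp hu hv; by rewrite eK w2_l0 // w2_set0 // mlt. Qed.
Lemma eK1 (x : W) u : (0 < d)%N -> (u < n)%N ->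
  e (setw 0 u x) *m T 0 = kc1 k n u *: e (setw 0 (n.-1 - u) x) + kc2 Q n u *: e (setw 0 u x).
Proof. move=> hp hu; by rewrite eK w1_l // w1_set // mlt. Qed.
Lemma eK12 (x : W) r a b c : (0 < r)%N -> (r.+1 < d)%N -> (a < n)%N -> (b < n)%N -> (c < n)%N ->
  e (w12 x r a b c) *m T 0 = kc1 k n a *: e (w12 x r (n.-1 - a) b c) + kc2 Q n a *: e (w12 x r a b c).
Proof. move=> h0 hr ha hb hc; by rewrite eK w12_l0 // w12_set // mlt. Qed.
Lemma eR12 (x : W) r a b c : (0 < r)%N -> (r.+1 < d)%N -> (a < n)%N -> (b < n)%N -> (c < n)%N ->
  e (w12 x r a b c) *m T r.+1 = rc1 k b c *: e (w12 x r a c b) + rc2 q b c *: e (w12 x r a b c).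
Proof. move=> h0 hr ha hb hc; by rewrite eR w12_l1 // w12_l2 // w12_swap. Qed.
Lemma eR22a (x : W) p r a b c f : (p.+1 < r)%N -> (r.+1 < d)%N -> (a < n)%N -> (b < n)%N -> (c < n)%N -> (f < n)%N ->
  e (w22 x p a b r c f) *m T p.+1 = rc1 k a b *: e (w22 x p b a r c f) + rc2 q a b *: e (w22 x p a b r c f).
Proof. move=> h0 hr ha hb hc hf; by rewrite eR w22_l0 // w22_l1 // w22_swap1. Qed.
Lemma eR22b (x : W) p r a b c f : (p.+1 < r)%N -> (r.+1 < d)%N -> (a < n)%N -> (b < n)%N -> (c < n)%N -> (f < n)%N ->
  e (w22 x p a b r c f) *m T r.+1 = rc1 k c f *: e (w22 x p a b r f c) + rc2 q c f *: e (w22 x p a b r c f).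
Proof. move=> h0 hr ha hb hc hf; by rewrite eR w22_l2 // w22_l3 // w22_swap2. Qed.

Lemma quadR p : (p.+1 < d)%N -> T p.+1 *m T p.+1 = (q^-1 - q) *: T p.+1 + 1%:M.
Proof.
move=> hp; apply: mx_eq_e => x.
rewrite -(w2_id hn x hp).
move: (letter_lt hn x p) (letter_lt hn x p.+1).
move: (letter x p) (letter x p.+1) => u v hu hv.
have h1 := @eR2 x p.
move: (T p.+1) h1 => A1 h1.
rewrite mulmxA mulmxDr mulmx1 -scalemxAr.
do 2 rewrite ?h1 // ?mulmxDl -?scalemxAl ?h1 //.
rewrite ?scalerA /rc1 /rc2.
cmp u v; rewrite ?eqxx ?ltnn /=; try (exfalso; clear h1; lia).
all: genE; apply/rowP => z; rewrite !mxE; by field.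
Qed.

Lemma comm0 r : (0 < r)%N -> (r.+1 < d)%N -> T 0 *m T r.+1 = T r.+1 *m T 0.
Proof.
move=> h0 hr; apply: mx_eq_e => x.
rewrite -(w12_id hn x h0 hr).
move: (letter_lt hn x 0) (letter_lt hn x r) (letter_lt hn x r.+1).
move: (letter x 0) (letter x r) (letter x r.+1) => a b c ha hb hc.
have h1 := @eK12 x r; have h2 := @eR12 x r.
have hm := mlt.
move: (T 0) (T r.+1) h1 h2 => A1 A2 h1 h2.
rewrite !mulmxA.
do 2 rewrite ?(h1, h2) // ?mulmxDl -?scalemxAl ?(h1, h2) //.
genE; apply/rowP => z; rewrite !mxE; ring.
Qed.

Lemma commRR p r : (p.+1 < r)%N -> (r.+1 < d)%N -> T p.+1 *m T r.+1 = T r.+1 *m T p.+1.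
Proof.
move=> h0 hr; apply: mx_eq_e => x.
rewrite -(w22_id hn x h0 hr).
move: (letter_lt hn x p) (letter_lt hn x p.+1) (letter_lt hn x r) (letter_lt hn x r.+1).
move: (letter x p) (letter x p.+1) (letter x r) (letter x r.+1) => a b c f ha hb hc hf.
have h1 := @eR22a x p r; have h2 := @eR22b x p r.
move: (T p.+1) (T r.+1) h1 h2 => A1 A2 h1 h2.
rewrite !mulmxA.
do 2 rewrite ?(h1, h2) // ?mulmxDl -?scalemxAl ?(h1, h2) //.
genE; apply/rowP => z; rewrite !mxE; ring.
Qed.

Ltac decif := repeat match goal with |- context [if ?c then _ else _] =>
  let H := fresh "Hc" in
  first [ assert (H : is_true c) by lia; rewrite H; clear H
        | assert (H : is_true (~~ c)) by lia; rewrite (negbTE H); clear H ] end.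

Lemma quad0 : (0 < d)%N -> (T 0 - (- Q)%:M) *m ((T 0 - Q^-1%:M) *m 1%:M) = 0.
Proof.
move=> hd; apply: mx_eq_e => x; rewrite mulmx0 -(w1_id hn x hd).
move: (letter_lt hn x 0); move: (letter x 0) => u hu.
have h := @eK1 x; move: (T 0) h => A h.
rewrite mulmx1 mulmxA.
do 3 rewrite ?mulmxBr ?mulmxBl ?mulmxDl ?mul_mx_scalar -?scalemxAl ?h ?mlt //.
have hu' : (u <= n.-1)%N by lia.
rewrite ?(subKn hu') /kc1 /kc2.
case: (ltngtP u.*2 n.-1) => hs; last (have e0 : (n.-1 - u = u)%N by lia); rewrite ?e0.
all: decif.
all: genE; apply/rowP => z; rewrite !mxE; by field.
Qed.

Lemma braid0 : (1 < d)%N -> T 0 *m T 1 *m T 0 *m T 1 = T 1 *m T 0 *m T 1 *m T 0.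
Proof.
move=> hd; apply: mx_eq_e => x.
rewrite -(w2_id hn x hd).
move: (letter_lt hn x 0) (letter_lt hn x 1).
move: (letter x 0) (letter x 1) => u v hu hv.
have h1 := @eK2 x; have h2 := @eR2 x 0.
move: (T 0) (T 1) h1 h2 => A1 A2 h1 h2.
have hm := mlt.
rewrite !mulmxA.
do 4 rewrite ?(h1, h2) // ?mulmxDl -?scalemxAl ?(h1, h2) //.
rewrite ?scalerA /rc1 /rc2 /kc1 /kc2.
have hu' : (u <= n.-1)%N by lia.
have hv' : (v <= n.-1)%N by lia.
rewrite ?(subKn hu') ?(subKn hv').
clear h1 h2.
cmp u v; try (let H := fresh in pose proof (ltngtP u (n.-1 - v)) as H; case: H => [?|?|?]; [| |subst]);
  rewrite ?(subKn hu') ?(subKn hv');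
  try (let H := fresh in pose proof (ltngtP u.*2 n.-1) as H; case: H => [?|?|?]; [| |
      (have e0 : (n.-1 - u = u)%N by lia); rewrite ?e0]);
  try (let H := fresh in pose proof (ltngtP v.*2 n.-1) as H; case: H => [?|?|?]; [| |
      (have e1 : (n.-1 - v = v)%N by lia); rewrite ?e1]);
  try (exfalso; lia).
all: decif.
all: genE; apply/rowP => z; rewrite !mxE; field; by rewrite ?hQ ?hq.
Qed.
End Rel.

Theorem proposition2p5 (k : fieldType) (Q q : k) (n d : nat)
  (hQ : Q != 0) (hq : q != 0) (hn : (1 <= n)%N) (hd : (1 <= d)%N)
  (i : nat) (hi1 : (1 <= i)%N) (hid : (i <= d)%N) (a : k) :
  eigenvalue (K_mx Q q n d i) a ->
  exists j : int, (`|j|%N < i)%N /\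
    (a = - Q * q ^ (2 * j) \/ a = Q^-1 * q ^ (2 * j)).
Proof.
move=> /eigenvalueP [v hv hv0].
have hP0 : pr (T_mx Q q n d 0) [:: - Q; Q^-1] = 0 by apply: quad0.
have hQj : forall j, (0 < j < d)%N ->
    T_mx Q q n d j *m T_mx Q q n d j = (q^-1 - q) *: T_mx Q q n d j + 1%:M.
  by case=> // p /andP [_ hp]; apply: quadR.
have hB0 : (1 < d)%N -> T_mx Q q n d 0 *m T_mx Q q n d 1 *m T_mx Q q n d 0 *m T_mx Q q n d 1
    = T_mx Q q n d 1 *m T_mx Q q n d 0 *m T_mx Q q n d 1 *m T_mx Q q n d 0.
  by move=> h; apply: braid0.
have hBj : forall j, (0 < j)%N -> (j.+1 < d)%N ->
    T_mx Q q n d j *m T_mx Q q n d j.+1 *m T_mx Q q n d j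
    = T_mx Q q n d j.+1 *m T_mx Q q n d j *m T_mx Q q n d j.+1.
  by case=> // p _ hp; apply: braidR.
have hC : forall j l, (j.+1 < l)%N -> (l < d)%N ->
    T_mx Q q n d j *m T_mx Q q n d l = T_mx Q q n d l *m T_mx Q q n d j.
  move=> j [|r] // hjl hl.
  case: j hjl => [|p] hjl; first by apply: comm0.
  by apply: commRR.
have hi : (0 < i <= d)%N by rewrite hi1 hid.
have [s [hs hP]] := good hQ hq hP0 hQj hB0 hBj hC hi.
have hP' : pr (K_mx Q q n d i) s = 0 := hP.
have := pr_eig s hv; rewrite hP' mulmx0 => /esym /eqP.
rewrite scaler_eq0 (negbTE hv0) orbF prodf_seq_eq0 => /hasP [c hc /= hac].
rewrite subr_eq0 in hac; rewrite (eqP hac).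
exact: hs.
Qed.
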